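(* For any $q=\Omega(1)$, any $\epsilon>0$, and any two parties $u$, $v$ holding input vectors $\mathbf{x}_u,\mathbf{x}_v\in\mathbb{R}^d$ respectively, there is a (randomized) quantization method in which $u$ sends $O(d\log q)$ bits to $v$, and if $\|\mathbf{x}_u-\mathbf{x}_v\|=O(q\epsilon)$, then $v$ can recover an unbiased estimate $\mathbf{z}$ of $\mathbf{x}_u$ (i.e. $\mathbb{E}[\mathbf{z}]=\mathbf{x}_u$) with $\|\mathbf{z}-\mathbf{x}_u\|=O(\epsilon)$.
   Context: $\|\cdot\|$ denotes a fixed one of the $\ell_1$, $\ell_2$ or $\ell_\infty$ norms on $\mathbb{R}^d$. Asymptotic notation hides absolute constants independent of $d,q,\epsilon$ and the inputs. Party $v$ uses its own vector $\mathbf{x}_v$ when decoding. *)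

(* Defs.v *)
From HB Require Import structures.
From mathcomp Require Import all_boot all_order all_algebra.
From mathcomp Require Import reals.
Set Implicit Arguments. Unset Strict Implicit. Unset Printing Implicit Defensive.
Import Order.TTheory GRing.Theory Num.Theory.
Local Open Scope ring_scope.

Inductive normkind := L1 | L2 | Linf.

Definition vnorm (R : realType) (nk : normkind) (d : nat) (x : 'rV[R]_d) : R :=
  match nk with
  | L1 => \sum_(i < d) `|x 0 i|
  | L2 => Num.sqrt (\sum_(i < d) (x 0 i) ^+ 2)
  | Linf => \big[Num.max/0]_(i < d) `|x 0 i|
  end.

Definition msg := seq bool.

Definition fdist (R : realType) := seq (R * msg).

Definition is_dist (R : realType) (D : fdist R) : Prop :=
  (forall p, p \in D -> 0 <= p.1) /\ \sum_(p <- D) p.1 = 1.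

Definition in_support (R : realType) (D : fdist R) (m : msg) : Prop :=
  exists2 p, p \in D & (0 < p.1) /\ p.2 = m.

Definition expect (R : realType) (d : nat) (D : fdist R) (f : msg -> 'rV[R]_d)
  : 'rV[R]_d := \sum_(p <- D) p.1 *: f p.2.

(* Main.v *)
Require Import Defs.
From HB Require Import structures.
From mathcomp Require Import all_boot all_order all_algebra.
From mathcomp Require Import reals.
From mathcomp Require Import zify ring lra.
From Stdlib Require Import ClassicalEpsilon.
Import Order.TTheory GRing.Theory Num.Theory.
Local Open Scope ring_scope.

Module Comb.
Set Implicit Arguments. Unset Strict Implicit. Unset Printing Implicit Defensive.
Local Open Scope nat_scope.
Fixpoint bits (b n : nat) : seq bool :=
  if b is b'.+1 then odd n :: bits b' n./2 else [::].
Fixpoint unbits (s : seq bool) : nat :=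
  if s is c :: s' then c + (unbits s').*2 else 0.

Lemma size_bits b n : size (bits b n) = b.
Proof. by elim: b n => //= b IH n; rewrite IH. Qed.

Lemma unbitsK b n : n < 2 ^ b -> unbits (bits b n) = n.
Proof.
elim: b n => [|b IH] n /=; first by rewrite expn0; case: n.
move=> hn; rewrite IH ?odd_double_half //.
by rewrite ltn_half_double -mul2n -expnS.
Qed.

Lemma flatten_eq_size (t : nat) (s1 s2 : seq (seq bool)) :
  size s1 = size s2 -> all (fun x => size x == t) s1 ->
  all (fun x => size x == t) s2 -> flatten s1 = flatten s2 -> s1 = s2.
Proof.
elim: s1 s2 => [|a s1 IH] [|b s2] //= [hs] /andP[/eqP ha h1] /andP[/eqP hb h2] e.
move/eqP: e; rewrite eqseq_cat; last by rewrite ha hb.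
by case/andP=> /eqP -> /eqP /(IH _ hs h1 h2) ->.
Qed.

Lemma greedy (T : finType) (e : rel T) (D : nat) :
  (forall x, #|[set y | (y != x) && e x y]| <= D) ->
  (forall x y, e x y -> e y x) ->
  exists f : T -> 'I_D.+1, forall x y, x != y -> e x y -> f x != f y.
Proof.
move=> hD hs.
suff [f hf] : exists f : T -> 'I_D.+1, forall x y, x \in enum T -> y \in enum T ->
   x != y -> e x y -> f x != f y.
  by exists f => x y; apply: hf; rewrite mem_enum.
elim: (enum T) => [|a s [f hf]].
  by exists (fun _ => ord0).
pose C := [set f y | y in [set y | (y != a) && e a y]].
have hC : #|C| < #|[set: 'I_D.+1]|.
  by rewrite cardsT card_ord ltnS (leq_trans (leq_imset_card _ _)).
have : ~: C != set0.
  rewrite -card_gt0; move: hC; have := cardsC C; rewrite cardsT card_ord; lia.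
case/set0Pn => c; rewrite in_setC => hc.
exists (fun x => if x == a then c else f x) => x y.
rewrite !inE => hx hy nxy exy.
have Cin z : z != a -> e a z -> f z \in C.
  by move=> h1 h2; apply/imsetP; exists z => //; rewrite inE h1 h2.
case: (eqVneq x a) => [exa|nxa]; case: (eqVneq y a) => [eya|nya].
- by rewrite exa eya eqxx in nxy.
- apply/eqP => E; move: hc; rewrite E Cin //; by rewrite -exa.
- apply/eqP => E; move: hc; rewrite -E Cin //; apply: hs; by rewrite -eya.
- move: hx hy; rewrite (negbTE nxa) (negbTE nya) /= => hx hy; exact: hf.
Qed.
Definition dd (d n : nat) : nat := absz (n%:Z - d%:Z)%R.

Lemma geo d : (\sum_(n < d.*2.+1) 2 ^ (d - dd d n)) + 2 = 3 * 2 ^ d.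
Proof.
elim: d => [|d IH]; first by rewrite big_ord_recl big_ord0 /dd.
rewrite doubleS big_ord_recl big_ord_recr /=.
rewrite (eq_bigr (fun i : 'I_d.*2.+1 => 2 * 2 ^ (d - dd d i))); last first.
  move=> i _; rewrite /bump /= -expnS; congr (2 ^ _).
  have := ltn_ord i; rewrite /dd; lia.
rewrite -big_distrr /= expnS.
have -> : d.+1 - dd d.+1 0 = 0 by rewrite /dd; lia.
have -> : d.+1 - dd d.+1 d.*2.+2 = 0 by rewrite /dd; lia.
rewrite expn0; move: IH; set S := \sum_(i < _) _; move=> IH; rewrite mulnA [3 * 2]mulnC -mulnA -IH; lia.
Qed.

Lemma expn_mono a b n : a <= b -> a ^ n <= b ^ n.
Proof. by move=> h; elim: n => // n IH; rewrite !expnS leq_mul. Qed.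

Definition short d (x : {ffun 'I_d -> 'I_(d.*2.+1)}) := (\sum_i dd d (x i) <= d)%N.

Definition Xset d := [set x : {ffun 'I_d -> 'I_(d.*2.+1)} | short x].

Lemma countX d : #|Xset d| <= 6 ^ d.
Proof.
pose W (x : {ffun 'I_d -> 'I_(d.*2.+1)}) := \prod_i 2 ^ (d - dd d (x i)).
have hW x : 2 ^ (d * d) = W x * 2 ^ (\sum_i dd d (x i)).
  have E : 2 ^ (\sum_i dd d (x i)) = \prod_i 2 ^ (dd d (x i)).
    exact: (big_morph (fun n => 2 ^ n) (expnD 2) (expn0 2)).
  rewrite E /W -big_split /=.
  rewrite (eq_bigr (fun _ => 2 ^ d)) ?prod_nat_const ?card_ord -?expnM //.
  by move=> i _; rewrite -expnD; congr (2 ^ _); have := ltn_ord (x i); rewrite /dd; lia.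
have h1 : #|Xset d| * 2 ^ (d * d) <= 2 ^ d * \sum_x W x.
  rewrite -sum1_card big_distrl /= big_distrr /=.
  rewrite big_mkcond /=; apply: leq_sum => x _.
  case: ifP => [|_]; last by [].
  rewrite inE => hx.
  rewrite mul1n (hW x) mulnC leq_mul2r; apply/orP; right.
  by rewrite leq_exp2l.
have h2 : \sum_x W x = \prod_(i < d) \sum_(n < d.*2.+1) 2 ^ (d - dd d n).
  by rewrite bigA_distr_bigA.
have h3 : \prod_(i < d) \sum_(n < d.*2.+1) 2 ^ (d - dd d n) <= (3 * 2 ^ d) ^ d.
  rewrite prod_nat_const card_ord.
  have : \sum_(n < d.*2.+1) 2 ^ (d - dd d n) <= 3 * 2 ^ d by have := geo d; lia.
  exact: expn_mono.
have : #|Xset d| * 2 ^ (d * d) <= 6 ^ d * 2 ^ (d * d).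
  apply: (leq_trans h1); rewrite h2; apply: (leq_trans (leq_mul (leqnn _) h3)).
  rewrite expnMn -expnM (_ : 6 = 3 * 2) // expnMn.
  by apply/eq_leq; rewrite mulnCA mulnA.
by rewrite leq_mul2r expn_eq0.
Qed.

Section Torus.
Variable d : nat.
Local Notation V := {ffun 'I_d -> 'I_d.+1}.
Definition pi1 (z : int) : 'I_d.+1 := inord (absz (z %% (d.+1)%:Z)%Z).
Definition piv (h : 'I_d -> int) : V := [ffun i => pi1 (h i)].
Definition shift (u : V) (x : {ffun 'I_d -> 'I_(d.*2.+1)}) : V :=
  [ffun i => pi1 ((u i)%:Z + (x i)%:Z - d%:Z)%R].
Definition erel : rel V := fun u w => [exists x, (x \in Xset d) && (w == shift u x)].

Lemma pi1_val z : ((pi1 z : nat) : int) = (z %% (d.+1)%:Z)%Z.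
Proof.
have h0 : (0 <= (z %% (d.+1)%:Z)%Z)%R by apply: modz_ge0.
have h1 : ((z %% (d.+1)%:Z)%Z < (d.+1)%:Z)%R by apply: ltz_pmod.
rewrite /pi1 inordK; last by lia.
lia.
Qed.

Lemma pi1_eq z z' : pi1 z = pi1 z' -> (z %% (d.+1)%:Z)%Z = (z' %% (d.+1)%:Z)%Z.
Proof. by move=> e; rewrite -!pi1_val e. Qed.

Lemma pi1_mod z : pi1 ((z %% (d.+1)%:Z)%Z) = pi1 z.
Proof. by rewrite /pi1 modz_mod. Qed.

Lemma pi1_small (u : 'I_d.+1) : pi1 (u : nat) = u.
Proof.
apply: val_inj; rewrite /= /pi1 modz_small; last by have := ltn_ord u; lia.
by rewrite /= inordK // -ltnS.
Qed.

Lemma erel_sym u w : erel u w -> erel w u.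
Proof.
case/existsP => x /andP[hx /eqP ->].
apply/existsP; exists [ffun i => rev_ord (x i)]; apply/andP; split.
  move: hx; rewrite !inE /short => hx; apply: leq_trans hx.
  apply: eq_leq; apply: eq_bigr => i _; rewrite ffunE /= /dd.
  have := ltn_ord (x i); set a := nat_of_ord (x i); lia.
apply/eqP/ffunP => i; rewrite !ffunE pi1_val /=.
rewrite -pi1_mod -addrA modzDml pi1_mod -[LHS]pi1_small; congr pi1.
have := ltn_ord (x i); set a := nat_of_ord (x i); lia.
Qed.

Lemma erel_deg u : #|[set w | (w != u) && erel u w]| <= (#|Xset d|).-1.
Proof.
have x0 : [ffun _ => (inord d : 'I_(d.*2.+1))] \in Xset d.
  rewrite inE /short (eq_bigr (fun _ => 0)) ?big_const_ord ?iter_addn_0 //.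
  move=> i _; rewrite ffunE /dd inordK; lia.
have sub : [set w | (w != u) && erel u w] \subset (shift u @: Xset d) :\ u.
  apply/subsetP => w; rewrite !inE => /andP[-> /existsP[x /andP[hx /eqP ->]]].
  by apply/imsetP; exists x.
apply: (leq_trans (subset_leq_card sub)).
have uin : u \in shift u @: Xset d.
  apply/imsetP; exists [ffun _ => (inord d : 'I_(d.*2.+1))] => //.
  apply/ffunP => i; rewrite !ffunE inordK; last by lia.
  by rewrite addrK pi1_small.
have := cardsD1 u (shift u @: Xset d); rewrite uin.
have := leq_imset_card (shift u) (Xset d); lia.
Qed.

Lemma close_erel (h h' : 'I_d -> int) :
  (\sum_i absz (h' i - h i)%R <= d) -> piv h = piv h' \/ erel (piv h) (piv h').
Proof.
move=> hs; right.
have hi i : absz (h' i - h i)%R <= d.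
  apply: leq_trans hs; rewrite (bigD1 i) //=; exact: leq_addr.
apply/existsP; exists [ffun i => (inord (absz (h' i - h i + d%:Z)%R) : 'I_(d.*2.+1))].
apply/andP; split.
  rewrite inE /short; apply: leq_trans hs; apply: eq_leq; apply: eq_bigr => i _.
  rewrite ffunE /dd inordK; have := hi i; lia.
apply/eqP/ffunP => i; rewrite !ffunE /= pi1_val inordK; last by have := hi i; lia.
rewrite -[RHS]pi1_mod -addrA modzDml pi1_mod; congr pi1; have := hi i; lia.
Qed.

Lemma piv_inj (h h' : 'I_d -> int) : piv h = piv h' ->
  (\sum_i absz (h' i - h i)%R <= d) -> forall i, h i = h' i.
Proof.
move=> e hs i.
have hi : absz (h' i - h i)%R <= d.
  apply: leq_trans hs; rewrite (bigD1 i) //=; exact: leq_addr.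
have := congr1 (fun f : {ffun _ -> _} => f i) e; rewrite !ffunE => /pi1_eq e2.
have := divz_eq (h i) (d.+1)%:Z; have := divz_eq (h' i) (d.+1)%:Z.
rewrite e2; move: ((h i %/ (d.+1)%:Z)%Z) ((h' i %/ (d.+1)%:Z)%Z) => a b.
move=> E1 E2; move: hi; rewrite E1 E2; set r := (_ %% _)%Z.
have -> : (b * d.+1 + r - (a * d.+1 + r) = (b - a) * d.+1)%R by ring.
rewrite abszM => hc.
have : absz (b - a)%R = 0 by nia.
lia.
Qed.

End Torus.

Lemma color2_ex d : exists col : ('I_d -> int) -> nat,
  (forall h, col h < 2 ^ (3 * d)) /\
  forall h h', col h = col h' -> (\sum_i absz (h' i - h i)%R <= d) -> forall i, h i = h' i.
Proof.
have [f hf] := greedy (@erel_deg d) (@erel_sym d).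
exists (fun h => f (piv h)); split.
  move=> h; apply: (leq_trans (ltn_ord _)).
  have x0 : 0 < #|Xset d|.
    apply/card_gt0P; exists [ffun _ => (inord d : 'I_(d.*2.+1))].
    rewrite inE /short (eq_bigr (fun _ => 0)) ?big_const_ord ?iter_addn_0 //.
    move=> i _; rewrite ffunE /dd inordK; lia.
  have := countX d; have : 6 ^ d <= 8 ^ d by apply: expn_mono.
  rewrite expnM (_ : 2 ^ 3 = 8) //; lia.
move=> h h' e hs.
apply: piv_inj => //.
case: (close_erel hs) => // hr.
case: (eqVneq (piv h) (piv h')) => // ne.
have e' : f (piv h) = f (piv h') by apply: val_inj.
by move: (hf _ _ ne hr); rewrite e' eqxx.
Qed.

End Comb.
Import Comb.

Module RealPart.
Set Implicit Arguments. Unset Strict Implicit. Unset Printing Implicit Defensive.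
Section Real.
Variable R : realType.

Definition delta (nk : normkind) (d : nat) (eps : R) : R :=
  match nk with
  | L1 => eps / (d.+1)%:R
  | L2 => eps / Num.sqrt (d.+1)%:R
  | Linf => eps
  end.

Lemma sqrt_facts (d : nat) : 0 < Num.sqrt ((d.+1)%:R : R) /\ Num.sqrt ((d.+1)%:R : R) ^+ 2 = (d.+1)%:R.
Proof. by split; [rewrite sqrtr_gt0 ltr0Sn | rewrite sqr_sqrtr // ler0n]. Qed.

Lemma delta_gt0 nk d eps : 0 < eps -> 0 < delta nk d eps.
Proof.
move=> he; case: nk => /=; first by rewrite divr_gt0 // ltr0Sn.
  by rewrite divr_gt0 //; case: (sqrt_facts d).
by [].
Qed.

Lemma sum_const_R (d : nat) (c : R) : \sum_(i < d) c = d%:R * c.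
Proof. by rewrite sumr_const card_ord mulr_natl. Qed.

Lemma P1 nk d eps (v : 'rV[R]_d) : 0 < eps ->
  (forall i, `|v 0 i| <= delta nk d eps) -> vnorm nk v <= eps.
Proof.
move=> he hv; case: nk hv => /= hv.
- apply: (le_trans (ler_sum _ (fun i _ => hv i))); rewrite sum_const_R.
  rewrite mulrA ler_pdivrMr ?ltr0Sn // -natr1; nra.
- have [s0 s2] := sqrt_facts d.
  set s := Num.sqrt _ in s0 s2 hv *.
  have hd : eps / s * s = eps by rewrite divfK // gt_eqF.
  set t := eps / s in hv hd *.
  have : \sum_(i < d) v 0 i ^+ 2 <= d%:R * t ^+ 2.
    rewrite -sum_const_R; apply: ler_sum => i _.
    rewrite -real_normK ?num_real //; have := hv i; have := normr_ge0 (v 0 i); nra.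
  move=> hS; rewrite -(ger0_norm (ltW he)) -sqrtr_sqr ler_wsqrtr //.
  move: s2; rewrite -natr1 => s2; nra.
- apply: bigmax_le; first exact: ltW.
  by move=> i _; apply: hv.
Qed.

Lemma P2 nk d eps (q : nat) (v : 'rV[R]_d) : 0 < eps -> (0 < q)%N ->
  vnorm nk v <= q%:R * eps -> \sum_i `|v 0 i| <= (d.+1)%:R * q%:R * delta nk d eps.
Proof.
move=> he hq; have q0 : (0 : R) < q%:R by rewrite ltr0n.
case: nk => /= hv.
- have -> : (d.+1)%:R * q%:R * (eps / (d.+1)%:R) = q%:R * eps :> R.
    by field; rewrite addrC natr1 pnatr_eq0.
  exact: hv.
- have [s0 s2] := sqrt_facts d.
  set s := Num.sqrt _ in s0 s2 hv *.
  have hd : eps / s * s = eps by rewrite divfK // gt_eqF.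
  set t := eps / s in hd *.
  have t0 : 0 < t by rewrite divr_gt0.
  set S := \sum_(i < d) v 0 i ^+ 2 in hv.
  have S0 : 0 <= S by apply: sumr_ge0 => i _; apply: sqr_ge0.
  have hS : S <= q%:R ^+ 2 * eps ^+ 2.
    rewrite -(sqr_sqrtr S0); have := sqrtr_ge0 S; move: hv; set r := Num.sqrt S.
    move=> hv hr; nra.
  have hsum : \sum_i (2 * (q%:R * t)) * `|v 0 i| <= \sum_(i < d) (v 0 i ^+ 2 + (q%:R * t) ^+ 2).
    apply: ler_sum => i _; rewrite -[v 0 i ^+ 2]real_normK ?num_real //.
    have := sqr_ge0 (`|v 0 i| - q%:R * t); nra.
  rewrite -mulr_sumr big_split /= sum_const_R -/S in hsum.
  move: s2 hsum; rewrite -natr1 => s2 hsum.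
  set X := \sum_i `|v 0 i| in hsum *.
  have hX : 0 <= X by apply: sumr_ge0 => i _.
  have e2 : eps ^+ 2 = t ^+ 2 * (d%:R + 1) by rewrite -hd exprMn s2.
  rewrite -mulrA; set u := q%:R * t in hsum *.
  have u0 : 0 < u by rewrite mulr_gt0.
  have e3 : q%:R ^+ 2 * eps ^+ 2 = u ^+ 2 * (d%:R + 1) by rewrite e2 /u; ring.
  have d0 : (0 : R) <= d%:R by rewrite ler0n.
  have h3 : 2 * u * X <= u ^+ 2 * (2 * d%:R + 1) by nra.
  nra.
- have hM i : `|v 0 i| <= \big[Num.max/0]_(i < d) `|v 0 i| by apply: le_bigmax.
  apply: (le_trans (ler_sum _ (fun i _ => hM i))); rewrite sum_const_R.
  move: hv; set M := \big[Num.max/0]_(i < d) `|v 0 i| => hv.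
  have M0 : 0 <= M by rewrite /M; elim/big_ind: _ => // x y hx hy; rewrite le_max hx.
  have d0 : (0 : R) <= d%:R by rewrite ler0n.
  rewrite -natr1; nra.
Qed.
End Real.

End RealPart.
Import RealPart.

Module UniqPart.
Set Implicit Arguments. Unset Strict Implicit. Unset Printing Implicit Defensive.
Definition msgk d (t : nat) (col : ('I_d -> int) -> nat) (k : 'I_d -> int) : msg :=
  flatten [seq bits t (absz (k i %% (2 ^ t)%:Z)%Z) | i <- enum 'I_d]
  ++ bits (3 * d) (col (fun i => (k i %/ (2 ^ t)%:Z)%Z)).

Lemma size_msgk d t col k : size (@msgk d t col k) = (t * d + 3 * d)%N.
Proof.
rewrite size_cat size_bits size_flatten /shape -map_comp.
rewrite (eq_map (g := fun _ => t)); last by move=> i /=; rewrite size_bits.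
rewrite (_ : sumn _ = t * size (enum 'I_d))%N; first by rewrite size_enum_ord mulnC.
by elim: (enum 'I_d) => /=[|a s ->]; rewrite ?muln0 ?mulnS.
Qed.

Section Uniq.
Variable R : realType.

Definition close d (delta r : R) (k : 'I_d -> int) (xv : 'rV[R]_d) :=
  \sum_i `|(k i)%:~R - xv 0 i / delta| <= r.

Lemma msg_uniq d t (col : ('I_d -> int) -> nat) (q : nat)
  (hcol : forall h, (col h < 2 ^ (3 * d))%N)
  (hinj : forall h h', col h = col h' -> (\sum_i absz (h' i - h i)%R <= d)%N -> forall i, h i = h' i)
  (hM : (4 * q.+1 <= 2 ^ t)%N) (delta : R) (xv : 'rV[R]_d) k k' :
  msgk t col k = msgk t col k' ->
  close delta ((d.+1 * q.+1)%N%:R) k xv -> close delta ((d.+1 * q.+1)%N%:R) k' xv ->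
  forall i, k i = k' i.
Proof.
set M := (2 ^ t)%:Z.
have M0 : (0 < M)%R by rewrite /M ltz_nat expn_gt0.
move=> E c1 c2.
have [Ef Ec] : flatten [seq bits t (absz (k i %% M)%Z) | i <- enum 'I_d] =
               flatten [seq bits t (absz (k' i %% M)%Z) | i <- enum 'I_d] /\
          bits (3 * d) (col (fun i => (k i %/ M)%Z)) =
          bits (3 * d) (col (fun i => (k' i %/ M)%Z)).
  move/eqP: E; rewrite /msgk eqseq_cat.
    by case/andP => /eqP -> /eqP ->.
  rewrite !size_flatten /shape -!map_comp.
  by congr sumn; apply: eq_map => i /=; rewrite !size_bits.
have hmod i : (k i %% M)%Z = (k' i %% M)%Z.
  have := flatten_eq_size (t := t) _ _ _ Ef.
  rewrite !size_map => /(_ erefl).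
  have allt (kk : 'I_d -> int) : all (fun x => size x == t) [seq bits t (absz (kk i %% M)%Z) | i <- enum 'I_d].
    by apply/allP => x /mapP [j _ ->]; rewrite size_bits.
  move=> /(_ (allt k) (allt k')) /eq_in_map /(_ i (mem_enum _ i)) eb.
  have lt (kk : 'I_d -> int) : (absz (kk i %% M)%Z < 2 ^ t)%N.
    have := modz_ge0 (kk i) (lt0r_neq0 M0); have := ltz_pmod (kk i) M0; rewrite /M; lia.
  have := unbitsK (lt k); rewrite eb unbitsK //.
  have := modz_ge0 (k i) (lt0r_neq0 M0); have := modz_ge0 (k' i) (lt0r_neq0 M0); lia.
have hcol_eq : col (fun i => (k i %/ M)%Z) = col (fun i => (k' i %/ M)%Z).
  by rewrite -(unbitsK (hcol (fun i => (k i %/ M)%Z))) Ec unbitsK.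
have hdist : (\sum_i absz (k i - k' i)%R <= 2 * (d.+1 * q.+1))%N.
  rewrite -(ler_nat R) natr_sum.
  apply: le_trans (_ : \sum_i (`|(k i)%:~R - xv 0 i / delta| + `|(k' i)%:~R - xv 0 i / delta|) <= _).
    apply: ler_sum => i _; rewrite natr_absz intr_norm rmorphB /=.
    set a := (k i)%:~R; set b := (k' i)%:~R; set y := xv 0 i / delta.
    rewrite (_ : a - b = (a - y) - (b - y)); last by ring.
    exact: ler_normB.
  rewrite big_split /= natrM mulr2n.
  rewrite mulrDl !mul1r; exact: lerD.
have hk i : k i - k' i = ((k i %/ M)%Z - (k' i %/ M)%Z) * M.
  rewrite {1}(divz_eq (k i) M) {1}(divz_eq (k' i) M) hmod; ring.
have hdist2 : (\sum_i absz ((k' i %/ M)%Z - (k i %/ M)%Z) <= d)%N.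
  move: hdist; rewrite (eq_bigr (fun i => absz ((k' i %/ M)%Z - (k i %/ M)%Z) * 2 ^ t)%N).
    rewrite -big_distrl /=; set A := (\sum_i _)%N => hA.
    have : (A * (4 * q.+1) <= 2 * (d.+1 * q.+1))%N.
      apply: leq_trans hA; exact: leq_mul.
    nia.
  move=> i _; rewrite hk abszM /M absz_nat; congr (_ * _)%N; lia.
move=> i; have := hinj _ _ hcol_eq hdist2 i => hq.
by rewrite (divz_eq (k i) M) (divz_eq (k' i) M) hq hmod.
Qed.
End Uniq.

End UniqPart.
Import UniqPart.

Lemma prod_sum (R : comNzRingType) (d : nat) (G : 'I_d -> bool -> R) :
  \sum_(B : {ffun 'I_d -> bool}) \prod_i G i (B i) = \prod_i (G i true + G i false).
Proof.
symmetry; rewrite (eq_bigr (fun i => \sum_b G i b)); last by move=> i _; rewrite big_bool.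
exact: bigA_distr_bigA.
Qed.

Theorem theorem1 (R : realType) (nk : normkind) :
  exists (q0 c1 : nat) (c2 c3 : R), 0 < c2 /\ 0 < c3 /\
  forall (q : nat) (eps : R) (d : nat), (q0 <= q)%N -> 0 < eps ->
  exists (enc : 'rV[R]_d -> fdist R) (dec : msg -> 'rV[R]_d -> 'rV[R]_d),
  forall xu xv : 'rV[R]_d,
    is_dist (enc xu) /\
    (forall m, in_support (enc xu) m -> (size m <= c1 * d * trunc_log 2 q)%N) /\
    (vnorm nk (xu - xv) <= c2 * q%:R * eps ->
       expect (enc xu) (fun m => dec m xv) = xu /\
       (forall m, in_support (enc xu) m -> vnorm nk (dec m xv - xu) <= c3 * eps)).
Proof.
exists 2%N, 7%N, 1, 1; split; first exact: ltr01; split; first exact: ltr01.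
move=> q eps d hq he.
have hq0 : (0 < q)%N by lia.
set T := trunc_log 2 q.
have T1 : (1 <= T)%N by rewrite /T trunc_log_gt0.
set t := (T + 3)%N.
have hM : (4 * q.+1 <= 2 ^ t)%N.
  have e : (2 ^ t = 2 ^ T.+1 * 4)%N by rewrite (_ : 4 = 2 ^ 2)%N // -expnD /t addn3 addnC.
  rewrite e; have := trunc_log_ltn q (isT : (1 < 2)%N); rewrite -/T; lia.
have [col [hcol hinj]] := color2_ex d.
set dl := delta nk d eps.
have dl0 : 0 < dl := delta_gt0 nk d he.
set r : R := (d.+1 * q.+1)%N%:R.
pose fl (xu : 'rV[R]_d) i := Num.floor (xu 0 i / dl).
pose fr (xu : 'rV[R]_d) i := xu 0 i / dl - (fl xu i)%:~R.
pose kS (xu : 'rV[R]_d) (B : {ffun 'I_d -> bool}) i := (fl xu i + (B i : nat)%:Z)%R.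
pose w (xu : 'rV[R]_d) (B : {ffun 'I_d -> bool}) :=
  \prod_i (if B i then fr xu i else 1 - fr xu i).
pose pick m xv := epsilon (inhabits (fun _ : 'I_d => 0%Z))
  (fun k => msgk t col k = m /\ close dl r k xv).
exists (fun xu => [seq (w xu B, msgk t col (kS xu B)) | B <- enum {ffun 'I_d -> bool}]).
exists (fun m xv => dl *: \row_i ((pick m xv i)%:~R)).
move=> xu xv.
have fr01 i : 0 <= fr xu i < 1.
  have := floor_itv (xu 0 i / dl); rewrite /fr /fl intrD; lra.
have w0 B : 0 <= w xu B.
  apply: prodr_ge0 => i _; have := fr01 i; case: (B i); lra.
have sumw : \sum_B w xu B = 1.
  rewrite /w (@prod_sum _ _ (fun i b => if b then fr xu i else 1 - fr xu i)).
  by apply: big1 => i _; rewrite subrKC.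
have marg j : \sum_B w xu B * ((B j : nat)%:R) = fr xu j.
  transitivity (\sum_(B : {ffun 'I_d -> bool}) \prod_i
     ((if B i then fr xu i else 1 - fr xu i) * (if i == j then (B i : nat)%:R else 1))).
    apply: eq_bigr => B _; rewrite big_split /=; congr (_ * _).
    by rewrite (bigD1 j) //= eqxx big1 ?mulr1 // => i /negbTE ->.
  rewrite (@prod_sum _ _ (fun i b => (if b then fr xu i else 1 - fr xu i) * (if i == j then (b : nat)%:R else 1))).
  rewrite (bigD1 j) //= eqxx big1 ?mulr1 ?mulr0 ?addr0 // => i /negbTE -> /=.
  by rewrite !mulr1 subrKC.
have enumE (F : {ffun 'I_d -> bool} -> 'rV[R]_d) :
   \sum_(B <- enum {ffun 'I_d -> bool}) F B = \sum_B F B.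
  by rewrite big_enum.
have enumE' (F : {ffun 'I_d -> bool} -> R) :
   \sum_(B <- enum {ffun 'I_d -> bool}) F B = \sum_B F B.
  by rewrite big_enum.
split.
  split; first by move=> p /mapP [B _ ->] /=.
  by rewrite big_map enumE'.
split.
  move=> m [p /mapP [B _ ->] [_ <-]] /=; rewrite size_msgk; nia.
move=> hv; rewrite mul1r in hv.
have hclose B : close dl r (kS xu B) xv.
  have P2' := P2 he hq0 hv; rewrite -/dl in P2'.
  rewrite /close.
  apply: le_trans (_ : \sum_i (1 + `|(xu - xv) 0 i| / dl) <= _).
    apply: ler_sum => i _; rewrite !mxE.
    have := fr01 i; rewrite /kS intrD /fr.
    rewrite (_ : (((B i : nat)%:Z)%:~R : R) = (B i : nat)%:R) //.
    set y := xu 0 i / dl; move: (fl xu i)%:~R => a h.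
    have -> : `|xu 0 i - xv 0 i| / dl = `|y - xv 0 i / dl|.
      by rewrite /y -mulrBl normrM [`|dl^-1|]gtr0_norm // invr_gt0.
    apply: le_trans (ler_distD y _ _) _; apply: lerD => //.
    by case: (B i) h => /= h; rewrite ler_norml; lra.
  rewrite big_split /= sum_const_R -mulr_suml mulr1.
  set X := \sum_i _ in P2' *.
  have hX : X / dl <= (d.+1)%:R * q%:R by rewrite ler_pdivrMr.
  rewrite /r natrM -!natr1; move: hX; rewrite -!natr1; lra.
have hdec B i : pick (msgk t col (kS xu B)) xv i = kS xu B i.
  have := epsilon_spec (inhabits (fun _ : 'I_d => 0%Z))
    (fun k => msgk t col k = msgk t col (kS xu B) /\ close dl r k xv)
    (ex_intro _ (kS xu B) (conj erefl (hclose B))).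
  case=> e1 c1; exact: (msg_uniq hcol hinj hM e1 c1 (hclose B) i).
split.
  rewrite /expect big_map enumE; apply/rowP => j; rewrite summxE.
  transitivity (dl * ((fl xu j)%:~R * \sum_B w xu B + \sum_B w xu B * ((B j : nat)%:R))).
    rewrite mulr_sumr -big_split mulr_sumr; apply: eq_bigr => B _ /=.
    rewrite !mxE hdec /kS intrD.
    rewrite (_ : (((B j : nat)%:Z)%:~R : R) = (B j : nat)%:R) //; ring.
  rewrite sumw marg /fr mulr1 addrC subrK mulrC divfK //; exact: lt0r_neq0.
move=> m [p /mapP [B _ ->] [_ <-]] /=.
rewrite mul1r; apply: P1 => // i; rewrite !mxE hdec /kS intrD.
rewrite (_ : (((B i : nat)%:Z)%:~R : R) = (B i : nat)%:R) //.
have := fr01 i; rewrite /fr; set y := xu 0 i / dl; move: (fl xu i)%:~R => a h.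
have -> : xu 0 i = dl * y by rewrite /y mulrC divfK // lt0r_neq0.
rewrite -mulrBr normrM gtr0_norm // -/dl -{2}[dl]mulr1 ler_pM2l //.
case: (B i) h => /= h; rewrite ler_norml; lra.
Qed.
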